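(* There is no complete pointed metric space $(M,d)$ and no $f\in \mathrm{Lip}_0(M,M)$ such that $\widehat f$ is a wild operator on $\mathcal F(M)$. More precisely, for every such $M$ and $f$: if $R_{\widehat f}$ has nonempty interior then $A_{\widehat f}$ has empty interior.
   Context: A pointed metric space is a metric space $(M,d)$ with a distinguished point $0=0_M$. For pointed metric spaces $M,N$, $\mathrm{Lip}_0(M,N)$ denotes the set of Lipschitz maps $f:M\to N$ with $f(0_M)=0_N$, and $\mathrm{Lip}_0(M)=\mathrm{Lip}_0(M,\mathbb R)$, a Banach space with norm $\mathrm{Lip}(\cdot)$ (the least Lipschitz constant). Let $\delta:M\to \mathrm{Lip}_0(M)^*$, $\delta(x)(\varphi)=\varphi(x)$. The Lipschitz-free space $\mathcal F(M)$ is the norm-closed linear span of $\delta(M)$ in $\mathrm{Lip}_0(M)^*$. For $f\in\mathrm{Lip}_0(M,N)$, $\widehat f:\mathcal F(M)\to\mathcal F(N)$ is the unique bounded linear operator with $\widehat f(\delta_M(x))=\delta_N(f(x))$ for all $x\in M$; $\|\widehat f\|=\mathrm{Lip}(f)$. For a self-map $g$ of a pointed metric space $(X,d)$ (in particular for a bounded linear operator on a Banach space, with base point the origin and the norm distance), write $R_g=\{x:\liminf_{n\to\infty} d(x,g^n(x))=0\}$, $U_g=\{x:\limsup_{n\to\infty} d(0,g^n(x))=\infty\}$, $A_g=\{x:\lim_{n\to\infty} d(0,g^n(x))=\infty\}$. A bounded linear operator $T$ on a Banach space $X$ is called wild if $X=A_T\cup R_T$, $\mathrm{int}(R_T)\neq\emptyset$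 and $\mathrm{int}(A_T)\neq\emptyset$. *)

(* Defs.v *)
From Stdlib Require Import Reals List.
Open Scope R_scope.

Section FreeSpaces.
Context {M : Type}.

Definition is_metric (d : M -> M -> R) : Prop :=
  (forall x y, 0 <= d x y) /\
  (forall x y, d x y = 0 <-> x = y) /\
  (forall x y, d x y = d y x) /\
  (forall x y w, d x w <= d x y + d y w).

Definition complete_metric (d : M -> M -> R) : Prop :=
  forall u : nat -> M,
    (forall eps, 0 < eps -> exists N, forall m n, (N <= m)%nat -> (N <= n)%nat ->
        d (u m) (u n) < eps) ->
    exists l, forall eps, 0 < eps -> exists N, forall n, (N <= n)%nat -> d (u n) l < eps.

Definition lip0_self (d : M -> M -> R) (z : M) (f : M -> M) : Prop :=
  f z = z /\ exists L, 0 <= L /\ forall x y, d (f x) (f y) <= L * d x y.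

Definition lipL (d : M -> M -> R) (z : M) (L : R) (phi : M -> R) : Prop :=
  0 <= L /\ phi z = 0 /\ forall x y, Rabs (phi x - phi y) <= L * d x y.

(* functionals on (real functions on) M; only their values on Lip_0(M) matter *)
Definition functional := (M -> R) -> R.

Definition dual_le (d : M -> M -> R) (z : M) (mu : functional) (r : R) : Prop :=
  forall phi L, lipL d z L phi -> Rabs (mu phi) <= r * L.

Definition fadd (mu nu : functional) : functional := fun phi => mu phi + nu phi.
Definition fsub (mu nu : functional) : functional := fun phi => mu phi - nu phi.
Definition fscale (a : R) (mu : functional) : functional := fun phi => a * mu phi.

Definition delta (x : M) : functional := fun phi => phi x.

Definition comb (s : list (R * M)) : functional :=
  fun phi => fold_right (fun p acc => fst p * phi (snd p) + acc) 0 s.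

(* mu belongs to F(M) = norm closure of span delta(M) in Lip_0(M)^* *)
Definition in_free (d : M -> M -> R) (z : M) (mu : functional) : Prop :=
  forall eps, 0 < eps -> exists s, dual_le d z (fsub mu (comb s)) eps.

(* equality as elements of Lip_0(M)^* *)
Definition feq (d : M -> M -> R) (z : M) (mu nu : functional) : Prop :=
  dual_le d z (fsub mu nu) 0.

Definition is_linearization (d : M -> M -> R) (z : M) (f : M -> M)
    (T : functional -> functional) : Prop :=
  (forall mu, in_free d z mu -> in_free d z (T mu)) /\
  (forall a mu nu, in_free d z mu -> in_free d z nu ->
      feq d z (T (fadd (fscale a mu) nu)) (fadd (fscale a (T mu)) (T nu))) /\
  (exists C, 0 <= C /\ forall mu r, in_free d z mu -> dual_le d z mu r ->
      dual_le d z (T mu) (C * r)) /\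
  (forall x, feq d z (T (delta x)) (delta (f x))).

Definition recurrent_set (d : M -> M -> R) (z : M) (T : functional -> functional)
    (x : functional) : Prop :=
  in_free d z x /\
  forall eps, 0 < eps -> forall N, exists n, (N <= n)%nat /\
      dual_le d z (fsub x (Nat.iter n T x)) eps.

Definition escaping_set (d : M -> M -> R) (z : M) (T : functional -> functional)
    (x : functional) : Prop :=
  in_free d z x /\
  forall K, exists N, forall n, (N <= n)%nat -> ~ dual_le d z (Nat.iter n T x) K.

Definition nonempty_interior (d : M -> M -> R) (z : M) (S : functional -> Prop) : Prop :=
  exists mu r, in_free d z mu /\ 0 < r /\
    forall nu, in_free d z nu -> dual_le d z (fsub nu mu) r -> S nu.

End FreeSpaces.

(* Main.v *)
Require Import Defs.
From Stdlib Require Import Reals List Lra Lia FunctionalExtensionality.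
Import ListNotations.
Open Scope R_scope.

Definition Ssum {M : Type} (l : list (R*M)) (psi : M -> R) (g : M -> M) : R :=
  fold_right (fun p acc => fst p * (psi (snd p) - psi (g (snd p))) + acc) 0 l.
Definition mapg {M : Type} (g : M -> M) (l : list (R*M)) : list (R*M) :=
  map (fun p => (fst p, g (snd p))) l.
Definition adm {M : Type} (l : list (R*M)) (psi : M -> R) (g : M -> M) : Prop :=
  forall p, In p l -> (psi (snd p) = 0 \/ psi (snd p) = 1) /\
                      (psi (g (snd p)) = 0 \/ psi (g (snd p)) = 1).
Fixpoint enum {M : Type} (l : list (R*M)) : list R :=
  match l with
  | [] => [0]
  | p :: l' => flat_map (fun v => [v; v + fst p; v - fst p]) (enum l')
  end.

Lemma enum_spec {M : Type} (l : list (R*M)) psi g :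
  adm l psi g -> In (Ssum l psi g) (enum l).
Proof.
  induction l as [|p l IH]; intros Ha; simpl.
  - left; reflexivity.
  - apply in_flat_map. exists (Ssum l psi g). split.
    + apply IH. intros q Hq. apply Ha. right; exact Hq.
    + destruct (Ha p (or_introl eq_refl)) as [[h1|h1] [h2|h2]];
      rewrite h1, h2; simpl.
      * left; ring.
      * right; right; left; ring.
      * right; left; ring.
      * left; ring.
Qed.

Lemma minpos (L : list R) : exists eta, 0 < eta /\
  forall v, In v L -> v <> 0 -> eta <= Rabs v.
Proof.
  induction L as [|v L IH].
  - exists 1; split; [lra|]. intros v [].
  - destruct IH as [e [He H]].
    destruct (Req_dec v 0) as [Hv|Hv].
    + exists e; split; [exact He|]. intros u [<-|Hu] Hu0; [contradiction|auto].
    + exists (Rmin e (Rabs v)); split.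
      * apply Rmin_glb_lt; [exact He| apply Rabs_pos_lt; exact Hv].
      * intros u [<-|Hu] Hu0; [apply Rmin_r|].
        eapply Rle_trans; [apply Rmin_l| auto].
Qed.

Lemma filter_len2 {A : Type} (f : A -> bool) (l : list A) :
  (length (filter f l) + length (filter (fun x => negb (f x)) l) = length l)%nat.
Proof.
  induction l as [|a l IH]; simpl; [reflexivity|].
  destruct (f a); simpl; lia.
Qed.

Lemma gap (n : nat) : forall (V : list R) a b w, (length V <= n)%nat -> 0 < w ->
  a + (INR (length V) + 1) * w <= b ->
  exists c, a <= c /\ c + w <= b /\ forall v, In v V -> v <= c \/ c + w <= v.
Proof.
  induction n as [|n IH]; intros V a b w Hl Hw Hab.
  - destruct V; [|simpl in Hl; lia].
    exists a; simpl in *; split; [lra|split; [lra| intros v []]].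
  - destruct V as [|v V'].
    + exists a; simpl in *; split; [lra|split; [lra| intros u []]].
    + simpl in Hl. rewrite length_cons, S_INR in Hab.
      assert (HV' : (length V' <= n)%nat) by lia.
      assert (Hlpos := pos_INR (length V')).
      destruct (Rle_lt_dec v a) as [Hva|Hva].
      { destruct (IH V' a b w HV' Hw) as [c [H1 [H2 H3]]]; [lra|].
        exists c; split; [lra|split; [lra|]]. intros u [<-|Hu]; [lra|auto]. }
      destruct (Rle_lt_dec b v) as [Hvb|Hvb].
      { destruct (IH V' a b w HV' Hw) as [c [H1 [H2 H3]]]; [lra|].
        exists c; split; [lra|split; [lra|]]. intros u [<-|Hu]; [lra|auto]. }
      set (f := fun u => if Rlt_dec u v then true else false).
      set (V1 := filter f V'). set (V2 := filter (fun x => negb (f x)) V').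
      assert (Hs := filter_len2 f V'). fold V1 V2 in Hs.
      assert (Hs' : INR (length V1) + INR (length V2) = INR (length V')).
      { rewrite <- plus_INR, Hs; reflexivity. }
      assert (HP1 := pos_INR (length V1)). assert (HP2 := pos_INR (length V2)).
      destruct (Rle_lt_dec (a + (INR (length V1) + 1) * w) v) as [C1|C1].
      ++ destruct (IH V1 a v w) as [c [H1 [H2 H3]]]; [lia|exact Hw|exact C1|].
        exists c; split; [lra|split; [lra|]].
        intros u [<-|Hu]; [right; lra|].
        destruct (Rlt_dec u v) as [Huv|Huv].
        ** apply H3. unfold V1. apply filter_In. split; [exact Hu|].
          unfold f. destruct (Rlt_dec u v); [reflexivity|contradiction].
        ** right; lra.
      ++ assert (C2 : v + (INR (length V2) + 1) * w <= b) by nra.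
        destruct (IH V2 v b w) as [c [H1 [H2 H3]]]; [lia|exact Hw|exact C2|].
        exists c; split; [lra|split; [lra|]].
        intros u [<-|Hu]; [left; lra|].
        destruct (Rlt_dec u v) as [Huv|Huv].
        ** left; lra.
        ** apply H3. unfold V2. apply filter_In. split; [exact Hu|].
          unfold f. destruct (Rlt_dec u v); [contradiction|reflexivity].
Qed.

Definition norm1 {M : Type} (d : M -> M -> R) (z : M) (l : list (R*M)) : R :=
  fold_right (fun p acc => Rabs (fst p) * d (snd p) z + acc) 0 l.

Lemma comb_app {M : Type} (l1 l2 : list (R*M)) phi :
  comb (l1 ++ l2) phi = comb l1 phi + comb l2 phi.
Proof.
  induction l1 as [|p l IH]; unfold comb in *; simpl; [ring|].
  rewrite IH; ring.
Qed.

Lemma comb_bound {M : Type} (d : M -> M -> R) z L phi (l : list (R*M)) :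
  lipL d z L phi -> Rabs (comb l phi) <= L * norm1 d z l.
Proof.
  intros [HL [Hz Hl]]. induction l as [|p l IH]; unfold comb, norm1 in *; simpl.
  - rewrite Rabs_R0; lra.
  - eapply Rle_trans; [apply Rabs_triang|].
    rewrite Rabs_mult.
    assert (H1 : Rabs (phi (snd p)) <= L * d (snd p) z).
    { specialize (Hl (snd p) z). rewrite Hz, Rminus_0_r in Hl. exact Hl. }
    assert (H2 := Rabs_pos (fst p)).
    assert (H3 : Rabs (fst p) * Rabs (phi (snd p)) <= Rabs (fst p) * (L * d (snd p) z))
      by (apply Rmult_le_compat_l; assumption).
    nra.
Qed.

Lemma norm1_nonneg {M : Type} (d : M -> M -> R) z (l : list (R*M)) :
  (forall x y, 0 <= d x y) -> 0 <= norm1 d z l.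
Proof.
  intros Hd. induction l as [|p l IH]; unfold norm1 in *; simpl; [lra|].
  assert (H := Rabs_pos (fst p)). assert (H' := Hd (snd p) z). nra.
Qed.

Lemma comb_diff_S {M : Type} (l : list (R*M)) g phi :
  comb l phi - comb (mapg g l) phi = Ssum l phi g.
Proof.
  induction l as [|p l IH]; unfold comb, Ssum, mapg in *; simpl; [ring|].
  rewrite <- IH; ring.
Qed.

Lemma Ssum_shift {M : Type} (l : list (R*M)) g psi k :
  Ssum l (fun p => psi p - k) g = Ssum l psi g.
Proof.
  induction l as [|p l IH]; unfold Ssum in *; simpl; [ring|].
  rewrite IH; ring.
Qed.

Lemma comb_neg {M : Type} (l : list (R*M)) phi :
  comb (map (fun p => (- fst p, snd p)) l) phi = - comb l phi.
Proof.
  induction l as [|p l IH]; unfold comb in *; simpl; [ring|].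
  rewrite IH; ring.
Qed.

Lemma lipL_nonneg {M : Type} (d : M -> M -> R) z L phi : lipL d z L phi -> 0 <= L.
Proof. intros [H _]; exact H. Qed.

Lemma in_free_comb {M : Type} (d : M -> M -> R) z (l : list (R*M)) :
  in_free d z (comb l).
Proof.
  intros eps He. exists l. intros phi L HL. unfold fsub.
  rewrite Rminus_diag, Rabs_R0. apply Rmult_le_pos; [lra|eapply lipL_nonneg; eauto].
Qed.

Lemma in_free_delta {M : Type} (d : M -> M -> R) z (x : M) :
  in_free d z (delta x).
Proof.
  intros eps He. exists [(1, x)]. intros phi L HL. unfold fsub, delta, comb; simpl.
  replace (phi x - (1 * phi x + 0)) with 0 by ring. rewrite Rabs_R0.
  apply Rmult_le_pos; [lra|eapply lipL_nonneg; eauto].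
Qed.

Lemma in_free_sub {M : Type} (d : M -> M -> R) z mu nu :
  in_free d z mu -> in_free d z nu -> in_free d z (fsub mu nu).
Proof.
  intros Hm Hn eps He.
  destruct (Hm (eps/2)) as [s1 H1]; [lra|].
  destruct (Hn (eps/2)) as [s2 H2]; [lra|].
  exists (s1 ++ map (fun p => (- fst p, snd p)) s2).
  intros phi L HL. specialize (H1 phi L HL). specialize (H2 phi L HL).
  unfold fsub in *. rewrite comb_app, comb_neg.
  replace (mu phi - nu phi - (comb s1 phi + - comb s2 phi))
    with ((mu phi - comb s1 phi) - (nu phi - comb s2 phi)) by ring.
  eapply Rle_trans; [apply Rabs_triang|]. rewrite Rabs_Ropp. lra.
Qed.

Lemma feq_val {M : Type} (d : M -> M -> R) z mu nu phi L :
  feq d z mu nu -> lipL d z L phi -> mu phi = nu phi.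
Proof.
  intros H HL. specialize (H phi L HL). unfold fsub in H.
  rewrite Rmult_0_l in H. assert (H0 := Rabs_pos (mu phi - nu phi)).
  assert (Rabs (mu phi - nu phi) = 0) by lra.
  unfold Rabs in H1; destruct (Rcase_abs (mu phi - nu phi)); lra.
Qed.

Lemma dual0_val {M : Type} (d : M -> M -> R) z mu phi L :
  dual_le d z mu 0 -> lipL d z L phi -> mu phi = 0.
Proof.
  intros H HL. specialize (H phi L HL). rewrite Rmult_0_l in H.
  assert (H0 := Rabs_pos (mu phi)). assert (Rabs (mu phi) = 0) by lra.
  unfold Rabs in H1; destruct (Rcase_abs (mu phi)); lra.
Qed.

Lemma T_resp {M : Type} (d : M -> M -> R) z f T mu mu' :
  is_linearization d z f T -> in_free d z mu -> in_free d z mu' ->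
  (forall phi L, lipL d z L phi -> mu phi = mu' phi) ->
  forall phi L, lipL d z L phi -> T mu phi = T mu' phi.
Proof.
  intros [Hf [Hlin [[C [HC Hb]] Hdel]]] Hm Hm' Heq phi L HL.
  assert (Hfr : in_free d z (fsub mu mu')) by (apply in_free_sub; auto).
  assert (H0 : dual_le d z (fsub mu mu') 0).
  { intros psi K HK. unfold fsub. rewrite (Heq psi K HK), Rminus_diag, Rabs_R0. lra. }
  assert (HT0 := Hb _ _ Hfr H0). rewrite Rmult_0_r in HT0.
  assert (Hl := Hlin 1 (fsub mu mu') mu' Hfr Hm').
  assert (Hmu : fadd (fscale 1 (fsub mu mu')) mu' = mu).
  { apply functional_extensionality; intro psi. unfold fadd, fscale, fsub. ring. }
  rewrite Hmu in Hl. rewrite (feq_val _ _ _ _ _ _ Hl HL). unfold fadd, fscale.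
  rewrite (dual0_val _ _ _ _ _ HT0 HL). ring.
Qed.

Lemma T_comb {M : Type} (d : M -> M -> R) z f T (l : list (R*M)) :
  is_linearization d z f T ->
  forall phi L, lipL d z L phi -> T (comb l) phi = comb (mapg f l) phi.
Proof.
  intros HT. assert (HT' := HT). destruct HT' as [Hf [Hlin [[C [HC Hb]] Hdel]]].
  induction l as [|p l IH]; intros phi L HL.
  - assert (H0 : dual_le d z (comb (@nil (R*M))) 0).
    { intros psi K HK. unfold comb; simpl. rewrite Rabs_R0. lra. }
    assert (H1 := Hb _ _ (in_free_comb d z []) H0). rewrite Rmult_0_r in H1.
    rewrite (dual0_val _ _ _ _ _ H1 HL). reflexivity.
  - change (comb (p :: l)) with (fadd (fscale (fst p) (delta (snd p))) (comb l)).
    assert (Hl := Hlin (fst p) (delta (snd p)) (comb l) (in_free_delta d z _) (in_free_comb d z l)).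
    rewrite (feq_val _ _ _ _ _ _ Hl HL). unfold fadd, fscale.
    rewrite (feq_val _ _ _ _ _ _ (Hdel (snd p)) HL), (IH phi L HL).
    unfold mapg, comb, delta; simpl. reflexivity.
Qed.

Lemma iter_comb {M : Type} (d : M -> M -> R) z f T (n : nat) (l : list (R*M)) :
  is_linearization d z f T ->
  in_free d z (Nat.iter n T (comb l)) /\
  forall phi L, lipL d z L phi ->
    Nat.iter n T (comb l) phi = comb (mapg (Nat.iter n f) l) phi.
Proof.
  intros HT. induction n as [|n [IH1 IH2]].
  - split; [apply in_free_comb|]. intros phi L HL. simpl.
    unfold mapg. rewrite map_ext with (g := fun x => x); [rewrite map_id; reflexivity|].
    intros [a b]; reflexivity.
  - split.
    + simpl. destruct HT as [Hf _]. apply Hf. exact IH1.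
    + intros phi L HL. simpl.
      rewrite (T_resp d z f T _ (comb (mapg (Nat.iter n f) l)) HT IH1 (in_free_comb d z _) IH2 phi L HL).
      rewrite (T_comb d z f T _ HT phi L HL).
      unfold mapg. rewrite map_map. simpl. reflexivity.
Qed.

Definition Gen {M : Type} (lam nu : list (R*M)) : Prop :=
  forall psi g, adm (lam ++ nu) psi g ->
    (exists p, In p lam /\ psi (snd p) <> psi (g (snd p))) ->
    Ssum (lam ++ nu) psi g <> 0.

Lemma build {M : Type} (d : M -> M -> R) z (nu : list (R*M)) :
  (forall x y, 0 <= d x y) ->
  forall xs beta, 0 < beta ->
  exists lam, (forall x, In x xs -> exists c, In (c,x) lam) /\
    norm1 d z lam < beta /\ Gen lam nu.
Proof.
  intros Hd xs. induction xs as [|x xs IH]; intros beta Hb.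
  - exists []. split; [intros x []|]. split; [unfold norm1; simpl; lra|].
    intros psi g _ [p [[] _]].
  - destruct (IH (beta/2)) as [lam' [H1 [H2 H3]]]; [lra|].
    destruct (minpos (enum (lam' ++ nu))) as [vm [Hvm Hvm2]].
    assert (Hdx := Hd x z).
    set (lm := Rmin (vm/2) (beta / (2 * (d x z + 1)))).
    assert (Hlm : 0 < lm).
    { apply Rmin_glb_lt; [lra|]. apply Rdiv_lt_0_compat; lra. }
    assert (Hlm1 : lm <= vm/2) by apply Rmin_l.
    assert (Hlm2 : lm <= beta / (2 * (d x z + 1))) by apply Rmin_r.
    assert (Hlm3 : lm * (d x z + 1) <= beta / 2).
    { apply Rmult_le_compat_r with (r := d x z + 1) in Hlm2; [|lra].
      replace (beta / (2 * (d x z + 1)) * (d x z + 1)) with (beta/2) in Hlm2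
        by (field; lra). exact Hlm2. }
    exists ((lm, x) :: lam'). split; [|split].
    + intros y [<-|Hy]; [exists lm; left; reflexivity|].
      destruct (H1 y Hy) as [c Hc]. exists c; right; exact Hc.
    + unfold norm1 in *; simpl. rewrite Rabs_pos_eq by lra. nra.
    + intros psi g Hadm [p [Hp Hne]].
      assert (Hadm' : adm (lam' ++ nu) psi g).
      { intros q Hq. apply Hadm. right; exact Hq. }
      assert (Hin := enum_spec _ _ _ Hadm').
      destruct (Hadm (lm, x) (or_introl eq_refl)) as [Ha1 Ha2]. simpl in Ha1, Ha2.
      change (Ssum (((lm, x) :: lam') ++ nu) psi g) with
        (lm * (psi x - psi (g x)) + Ssum (lam' ++ nu) psi g).
      destruct (Req_dec (psi x) (psi (g x))) as [Heq|Hneq].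
      * rewrite Heq, Rminus_diag, Rmult_0_r, Rplus_0_l.
        apply H3; [exact Hadm'|]. exists p. destruct Hp as [<-|Hp].
        -- simpl in Hne. contradiction.
        -- split; assumption.
      * destruct (Req_dec (Ssum (lam' ++ nu) psi g) 0) as [H0|H0].
        -- rewrite H0. destruct Ha1 as [E1|E1]; destruct Ha2 as [E2|E2];
           rewrite E1, E2 in *; try (exfalso; apply Hneq; reflexivity); lra.
        -- assert (Hv := Hvm2 _ Hin H0).
           intro Habs.
           assert (Hs : Ssum (lam' ++ nu) psi g = - (lm * (psi x - psi (g x)))) by lra.
           rewrite Hs in Hv. rewrite Rabs_Ropp, Rabs_mult, Rabs_pos_eq in Hv by lra.
           destruct Ha1 as [E1|E1]; destruct Ha2 as [E2|E2]; rewrite E1, E2 in Hv, Hneq;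
           try (exfalso; apply Hneq; reflexivity); unfold Rabs in Hv; destruct (Rcase_abs _); lra.
Qed.

Lemma sep {M : Type} (d : M -> M -> R) z (l : list (R*M)) (g : M -> M) (x : M) (eta eps : R) :
  is_metric d -> 0 < eta ->
  (forall psi, adm l psi g -> psi x <> psi (g x) -> eta <= Rabs (Ssum l psi g)) ->
  (forall phi L, lipL d z L phi -> Rabs (comb l phi - comb (mapg g l) phi) <= eps * L) ->
  d (g x) x <= (2 * INR (length l) + 1) * eps / eta.
Proof.
  intros [Hd0 [Hdeq [Hsym Htri]]] Heta Hgen Hcl.
  assert (Heps : 0 <= eps).
  { assert (Hz0 : forall l' : list (R*M), comb l' (fun _ => 0) = 0).
    { intro l'; induction l' as [|p l' IH]; unfold comb in *; simpl; [ring|].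
      rewrite IH; ring. }
    assert (H := Hcl (fun _ => 0) 1).
    rewrite !Hz0, Rminus_diag, Rabs_R0 in H. apply Rmult_le_reg_r with 1; [lra|].
    rewrite Rmult_0_l. apply H.
    split; [lra|split; [reflexivity|]]. intros a b. rewrite Rminus_diag, Rabs_R0.
    rewrite Rmult_1_l. apply Hd0. }
  assert (HK := pos_INR (length l)).
  set (D := d (g x) x).
  destruct (Req_dec D 0) as [HD|HD].
  { rewrite HD. apply Rmult_le_pos; [nra|]. left; apply Rinv_0_lt_compat; exact Heta. }
  assert (HDp : 0 < D) by (assert (H := Hd0 (g x) x); fold D in H; lra).
  set (V := map (fun p => d (snd p) x) l ++ map (fun p => d (g (snd p)) x) l).
  assert (HV : INR (length V) = 2 * INR (length l)).
  { unfold V. rewrite length_app, !length_map, plus_INR. ring. }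
  set (w := D / (2 * INR (length l) + 1)).
  assert (Hw : 0 < w) by (unfold w; apply Rdiv_lt_0_compat; lra).
  destruct (gap (length V) V 0 D w (Nat.le_refl _) Hw) as [c [Hc1 [Hc2 Hc3]]].
  { rewrite HV. unfold w. right. field. lra. }
  set (psi := fun p => Rmin 1 (Rmax 0 ((c + w - d p x) / w))).
  assert (Hpsi1 : forall p, d p x <= c -> psi p = 1).
  { intros p Hp. unfold psi. assert (1 <= (c + w - d p x)/w).
    { apply Rmult_le_reg_r with w; [exact Hw|]. unfold Rdiv.
      rewrite Rmult_assoc, Rinv_l by lra. lra. }
    rewrite Rmax_right by lra. apply Rmin_left; lra. }
  assert (Hpsi0 : forall p, c + w <= d p x -> psi p = 0).
  { intros p Hp. unfold psi. assert ((c + w - d p x)/w <= 0).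
    { apply Rmult_le_reg_r with w; [exact Hw|]. unfold Rdiv.
      rewrite Rmult_assoc, Rinv_l by lra. lra. }
    rewrite Rmax_left by lra. apply Rmin_right; lra. }
  assert (Hclamp : forall a b, Rabs (Rmin 1 (Rmax 0 a) - Rmin 1 (Rmax 0 b)) <= Rabs (a - b)).
  { intros a b. unfold Rmin, Rmax.
    repeat (destruct (Rle_dec _ _)); unfold Rabs; repeat destruct (Rcase_abs _); lra. }
  set (phi := fun p => psi p - psi z).
  assert (Hlip : lipL d z (/ w) phi).
  { split; [left; apply Rinv_0_lt_compat; exact Hw|]. split; [unfold phi; ring|].
    intros a b. unfold phi.
    replace (psi a - psi z - (psi b - psi z)) with (psi a - psi b) by ring.
    eapply Rle_trans; [apply Hclamp|].
    replace ((c + w - d a x) / w - (c + w - d b x) / w) with ((d b x - d a x) * / w)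
      by (field; lra).
    rewrite Rabs_mult, (Rabs_pos_eq (/w)) by (left; apply Rinv_0_lt_compat; exact Hw).
    rewrite Rmult_comm. apply Rmult_le_compat_l; [left; apply Rinv_0_lt_compat; exact Hw|].
    assert (H1 := Htri b a x). assert (H2 := Htri a b x). rewrite (Hsym b a) in H1.
    unfold Rabs; destruct (Rcase_abs _); lra. }
  assert (Hadm : adm l psi g).
  { intros p Hp. split.
    - destruct (Hc3 (d (snd p) x)) as [H|H].
      + unfold V. apply in_or_app. left. apply in_map_iff. exists p; auto.
      + right; apply Hpsi1; exact H.
      + left; apply Hpsi0; exact H.
    - destruct (Hc3 (d (g (snd p)) x)) as [H|H].
      + unfold V. apply in_or_app. right. apply in_map_iff. exists p; auto.
      + right; apply Hpsi1; exact H.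
      + left; apply Hpsi0; exact H. }
  assert (Hx1 : psi x = 1) by (apply Hpsi1; assert (d x x = 0) by (apply Hdeq; reflexivity); lra).
  assert (Hx0 : psi (g x) = 0) by (apply Hpsi0; fold D; lra).
  assert (He := Hgen psi Hadm ltac:(lra)).
  assert (Hc := Hcl phi (/ w) Hlip).
  rewrite comb_diff_S in Hc. unfold phi in Hc. rewrite Ssum_shift in Hc.
  assert (Hew : eta <= eps * / w) by lra.
  assert (Hew2 : eta * w <= eps).
  { apply Rmult_le_compat_r with (r := w) in Hew; [|lra].
    rewrite Rmult_assoc, Rinv_l in Hew by lra. lra. }
  unfold w in Hew2.
  apply Rmult_le_reg_r with eta; [exact Heta|].
  unfold Rdiv. rewrite Rmult_assoc, Rinv_l by lra.
  apply Rmult_le_compat_r with (r := 2 * INR (length l) + 1) in Hew2; [|lra].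
  replace (eta * (D / (2 * INR (length l) + 1)) * (2 * INR (length l) + 1)) with (D * eta)
    in Hew2 by (field; lra). lra.
Qed.

Definition asum {M : Type} (l : list (R*M)) : R :=
  fold_right (fun p acc => Rabs (fst p) + acc) 0 l.

Lemma norm1_mapg {M : Type} (d : M -> M -> R) z g (l : list (R*M)) :
  is_metric d -> (forall p, In p l -> d (g (snd p)) (snd p) <= 1) ->
  norm1 d z (mapg g l) <= norm1 d z l + asum l.
Proof.
  intros [Hd0 [_ [_ Htri]]] H. induction l as [|p l IH]; unfold norm1, asum, mapg in *; simpl; [lra|].
  assert (H1 := H p (or_introl eq_refl)).
  assert (H2 := Htri (g (snd p)) (snd p) z).
  assert (H3 := Rabs_pos (fst p)).
  assert (IH' := IH (fun q Hq => H q (or_intror Hq))).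
  nra.
Qed.

Theorem theorem1p3 (M : Type) (d : M -> M -> R) (z : M) (f : M -> M)
    (T : functional -> functional) :
  is_metric d -> complete_metric d -> lip0_self d z f ->
  is_linearization d z f T ->
  nonempty_interior d z (recurrent_set d z T) ->
  ~ nonempty_interior d z (escaping_set d z T).
Proof.
  intros Hmet _ _ HT [nu0 [s [Hnu0 [Hs HR]]]] [mu0 [r [Hmu0 [Hr HA]]]].
  assert (Hd0 : forall x y, 0 <= d x y) by apply Hmet.
  destruct (Hmu0 (r/2)) as [sm Hsm]; [lra|].
  assert (HAm : escaping_set d z T (comb sm)).
  { apply HA; [apply in_free_comb|]. intros phi L HL.
    assert (H := Hsm phi L HL). assert (HL0 := lipL_nonneg _ _ _ _ HL).
    unfold fsub in *. rewrite <- Rabs_Ropp.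
    replace (- (comb sm phi - mu0 phi)) with (mu0 phi - comb sm phi) by ring. nra. }
  destruct (Hnu0 (s/2)) as [sn Hsn]; [lra|].
  destruct (build d z sn Hd0 (map snd sm) (s/2)) as [lam [Hcov [Hnorm HG]]]; [lra|].
  set (l := lam ++ sn).
  assert (HRw : recurrent_set d z T (comb l)).
  { apply HR; [apply in_free_comb|]. intros phi L HL.
    assert (H := Hsn phi L HL). assert (HL0 := lipL_nonneg _ _ _ _ HL).
    assert (Hb := comb_bound d z L phi lam HL).
    unfold fsub in *. unfold l. rewrite comb_app.
    replace (comb lam phi + comb sn phi - nu0 phi)
      with (comb lam phi - (nu0 phi - comb sn phi)) by ring.
    eapply Rle_trans; [apply Rabs_triang|]. rewrite Rabs_Ropp.
    assert (H4 : L * norm1 d z lam <= L * (s/2)) by (apply Rmult_le_compat_l; lra).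
    nra. }
  destruct (minpos (enum l)) as [eta [Heta Heta2]].
  set (K0 := norm1 d z sm + asum sm).
  destruct HAm as [_ HAe]. destruct (HAe K0) as [N0 HN0].
  destruct HRw as [_ HRr].
  assert (HKl := pos_INR (length l)).
  set (eps := eta / (2 * INR (length l) + 1)).
  assert (Heps : 0 < eps) by (unfold eps; apply Rdiv_lt_0_compat; lra).
  destruct (HRr eps Heps N0) as [n [Hn Hdl]].
  destruct (iter_comb d z f T n l HT) as [_ Hit].
  destruct (iter_comb d z f T n sm HT) as [_ Hit2].
  set (g := Nat.iter n f) in *.
  assert (Hcl : forall phi L, lipL d z L phi ->
     Rabs (comb l phi - comb (mapg g l) phi) <= eps * L).
  { intros phi L HL. rewrite <- (Hit phi L HL). apply Hdl. exact HL. }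
  assert (Hret : forall p, In p sm -> d (g (snd p)) (snd p) <= 1).
  { intros p Hp.
    assert (Hx : In (snd p) (map snd sm)) by (apply in_map; exact Hp).
    destruct (Hcov _ Hx) as [c Hc].
    assert (Hs' := sep d z l g (snd p) eta eps Hmet Heta).
    replace ((2 * INR (length l) + 1) * eps / eta) with 1 in Hs'
      by (unfold eps; field; lra).
    apply Hs'; [|exact Hcl].
    intros psi Hadm Hne. apply Heta2.
    - apply enum_spec; exact Hadm.
    - apply HG; [exact Hadm|]. exists (c, snd p). split; [exact Hc| exact Hne]. }
  apply (HN0 n Hn). intros phi L HL.
  rewrite (Hit2 phi L HL).
  assert (HL0 := lipL_nonneg _ _ _ _ HL).
  eapply Rle_trans; [apply (comb_bound d z L phi _ HL)|].
  assert (Hn1 := norm1_mapg d z g sm Hmet Hret). fold K0 in Hn1.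
  rewrite Rmult_comm. apply Rmult_le_compat_r; [exact HL0| exact Hn1].
Qed.
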